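(* Let $\mathbb P$ be an atomless probability measure and $Y_1\le Y_2$ nonnegative random variables with $\mathbb E^{\mathbb P}(Y_1)<1<\mathbb E^{\mathbb P}(Y_2)<\infty$. Let $\overline{\mathbb Q}(A)=\sup_{\mathbb Q\in\mathcal P(\mathbb P,Y_1,Y_2)}\mathbb Q(A)$. For $A\in\mathcal F$: if $\mathbb E^{\mathbb P}(Y_2\mathds 1_A+Y_1\mathds 1_{A^c})\le1$, then $\overline{\mathbb Q}(A)=\mathbb E^{\mathbb P}(Y_2\mathds 1_A)$; if $\mathbb E^{\mathbb P}(Y_2\mathds 1_A+Y_1\mathds 1_{A^c})>1$, then $\overline{\mathbb Q}(A)=\mathbb E^{\mathbb P}(Y_2\mathds 1_B+Y_1\mathds 1_{A\setminus B})$ for any measurable $B\subseteq A$ with $\mathbb E^{\mathbb P}(Y_2\mathds 1_B+Y_1\mathds 1_{B^c})=1$ (such $B$ exist).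
   Context: $\mathcal P(\mathbb P,Y_1,Y_2)=\{\mathbb Q \text{ probability on }(\Omega,\mathcal F):\mathbb Q\ll\mathbb P,\ Y_1\le \mathrm d\mathbb Q/\mathrm d\mathbb P\le Y_2\ \mathbb P\text{-a.s.}\}$. *)

(* Defs.v *)
From HB Require Import structures.
From mathcomp Require Import all_boot all_order all_algebra.
From mathcomp Require Import all_classical all_reals all_analysis.
Set Implicit Arguments. Unset Strict Implicit. Unset Printing Implicit Defensive.
Import Order.TTheory GRing.Theory Num.Theory.
Local Open Scope classical_set_scope.
Local Open Scope ring_scope.
Local Open Scope ereal_scope.

Definition atomless (d : measure_display) (T : measurableType d) (R : realType)
  (P : probability T R) : Prop :=
  forall A : set T, measurable A -> 0 < P A ->
    exists B : set T, [/\ measurable B, B `<=` A, 0 < P B & P B < P A].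

Definition density_between (d : measure_display) (T : measurableType d)
  (R : realType) (P Q : probability T R) (Y1 Y2 : T -> R) : Prop :=
  exists f : T -> R,
    [/\ measurable_fun setT f,
        (forall x, (0 <= f x)%R),
        (forall A, measurable A -> Q A = \int[P]_(x in A) (f x)%:E)
      & {ae P, forall x, (Y1 x <= f x)%R /\ (f x <= Y2 x)%R}].

Definition PQset (d : measure_display) (T : measurableType d) (R : realType)
  (P : probability T R) (Y1 Y2 : T -> R) : set (probability T R) :=
  [set Q : probability T R | (Q : set T -> \bar R) `<< P /\ density_between P Q Y1 Y2].

Definition Qbar (d : measure_display) (T : measurableType d) (R : realType)
  (P : probability T R) (Y1 Y2 : T -> R) (A : set T) : \bar R :=
  ereal_sup [set Q A | Q in PQset P Y1 Y2].

(* Main.v *)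
Require Import Defs.
From HB Require Import structures.
From mathcomp Require Import all_boot all_order all_algebra.
From mathcomp Require Import all_classical all_reals all_analysis.
From mathcomp Require Import measurable_realfun.
From mathcomp Require Import lra ring.
Set Implicit Arguments. Unset Strict Implicit.
Import Order.TTheory GRing.Theory Num.Theory.
Local Open Scope classical_set_scope.
Local Open Scope ring_scope.
Local Open Scope ereal_scope.

Section dmeasure.
Context d (T : measurableType d) (R : realType) (P : {measure set T -> \bar R}).
Variable g : T -> R.
Definition dmeas (mg : measurable_fun setT g) (g0 : forall x, (0 <= g x)%R) : set T -> \bar R :=
  fun A => \int[P]_(x in A) (g x)%:E.
Variables (mg : measurable_fun setT g) (g0 : forall x, (0 <= g x)%R).
Let dm0 : dmeas mg g0 set0 = 0. Proof. by rewrite /dmeas integral_set0. Qed.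
Let dm_ge0 A : 0 <= dmeas mg g0 A.
Proof. by apply: integral_ge0 => x _; rewrite lee_fin. Qed.
Let dm_sa : semi_sigma_additive (dmeas mg g0).
Proof.
apply: semi_sigma_additive_nng_induced => //.
exact/measurable_EFinP.
Qed.
HB.instance Definition _ := isMeasure.Build _ _ _ (dmeas mg g0) dm0 dm_ge0 dm_sa.

Definition dprob (mg : measurable_fun setT g) (g0 : forall x, (0 <= g x)%R)
  (g1 : \int[P]_x (g x)%:E = 1) : set T -> \bar R :=
  fun A => \int[P]_(x in A) (g x)%:E.
Variable g1 : \int[P]_x (g x)%:E = 1.
Let dp0 : dprob mg g0 g1 set0 = 0. Proof. exact: dm0. Qed.
Let dp_ge0 A : 0 <= dprob mg g0 g1 A. Proof. exact: dm_ge0. Qed.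
Let dp_sa : semi_sigma_additive (dprob mg g0 g1). Proof. exact: dm_sa. Qed.
HB.instance Definition _ := isMeasure.Build _ _ _ (dprob mg g0 g1) dp0 dp_ge0 dp_sa.
Let dp1 : dprob mg g0 g1 setT = 1. Proof. exact: g1. Qed.
HB.instance Definition _ := Measure_isProbability.Build _ _ _ (dprob mg g0 g1) dp1.
End dmeasure.

Section ihelp.
Context d (T : measurableType d) (R : realType) (mu : {measure set T -> \bar R}).
Implicit Types h : T -> R.

Lemma iD h1 h2 : measurable_fun setT h1 -> measurable_fun setT h2 ->
  (forall x, (0 <= h1 x)%R) -> (forall x, (0 <= h2 x)%R) ->
  \int[mu]_x (h1 x + h2 x)%:E = \int[mu]_x (h1 x)%:E + \int[mu]_x (h2 x)%:E.
Proof.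
move=> m1 m2 p1 p2; under eq_integral do rewrite EFinD.
apply: ge0_integralD => //.
- by move=> x _; rewrite lee_fin.
- exact/measurable_EFinP.
- by move=> x _; rewrite lee_fin.
- exact/measurable_EFinP.
Qed.

Lemma iZ k h : (0 <= k)%R -> measurable_fun setT h -> (forall x, (0 <= h x)%R) ->
  \int[mu]_x (k * h x)%:E = k%:E * \int[mu]_x (h x)%:E.
Proof.
move=> k0 m p; under eq_integral do rewrite EFinM.
apply: ge0_integralZl_EFin => //.
- by move=> x _; rewrite lee_fin.
- exact/measurable_EFinP.
Qed.

Lemma ile h1 h2 : measurable_fun setT h1 -> measurable_fun setT h2 ->
  (forall x, (0 <= h1 x)%R) -> (forall x, (h1 x <= h2 x)%R) ->
  \int[mu]_x (h1 x)%:E <= \int[mu]_x (h2 x)%:E.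
Proof.
move=> m1 m2 p1 le12; apply: ge0_le_integral => //.
- by move=> x _; rewrite lee_fin.
- exact/measurable_EFinP.
- exact/measurable_EFinP.
- by move=> x _; rewrite lee_fin.
Qed.

Lemma iset A h : \int[mu]_(x in A) (h x)%:E = \int[mu]_x (h x * \1_A x)%:E.
Proof.
rewrite integral_mkcond; apply: eq_integral => x _.
by rewrite /patch indicE; case: (x \in A); rewrite ?mulr1 ?mulr0.
Qed.

Lemma ige0 h : (forall x, (0 <= h x)%R) -> 0 <= \int[mu]_x (h x)%:E.
Proof. by move=> p; apply: integral_ge0 => x _; rewrite lee_fin. Qed.

Lemma ifin h Y : measurable_fun setT h -> measurable_fun setT Y ->
  (forall x, (0 <= h x)%R) -> (forall x, (h x <= Y x)%R) ->
  \int[mu]_x (Y x)%:E < +oo -> \int[mu]_x (h x)%:E \is a fin_num.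
Proof.
move=> mh mY p le lt; rewrite ge0_fin_numE ?ige0//.
by apply: le_lt_trans lt; apply: ile.
Qed.

End ihelp.

Section achieve.
Context d (T : measurableType d) (R : realType) (P : probability T R) (Y1 Y2 : T -> R).

Lemma achieve f (mf : measurable_fun setT f) :
  (forall x, (0 <= Y1 x)%R) -> (forall x, (Y1 x <= f x)%R /\ (f x <= Y2 x)%R) ->
  \int[P]_x (f x)%:E = 1 ->
  forall A, measurable A -> \int[P]_x (f x * \1_A x)%:E <= Qbar P Y1 Y2 A.
Proof.
move=> Y10 fY f1 A mA.
have f0 : forall x, (0 <= f x)%R by move=> x; exact: le_trans (Y10 x) (fY x).1.
pose Q : probability T R := @dprob _ _ _ P f mf f0 f1.
apply: ereal_sup_ubound; exists Q; last by rewrite /Q /= /dprob iset.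
split.
  move=> N PN B mB BN; rewrite /Q /= /dprob null_set_integral//.
    by apply: measurable_funTS; exact/measurable_EFinP.
  exact: PN.
exists f; split => //.
by apply: aeW => x; exact: fY.
Qed.

Lemma ubPQ Q : PQset P Y1 Y2 Q -> exists f : T -> R, [/\ measurable_fun setT f,
  forall x, (0 <= f x)%R, \int[P]_x (f x)%:E = 1,
  forall A, measurable A -> Q A = \int[P]_x (f x * \1_A x)%:E &
  {ae P, forall x, (Y1 x <= f x)%R /\ (f x <= Y2 x)%R}].
Proof.
move=> [_ [f [mf f0 QA ae]]]; exists f; split => //.
  by rewrite -(QA setT measurableT) probability_setT.
by move=> A mA; rewrite QA // iset.
Qed.
End achieve.

Section sierp.
Context d (T : measurableType d) (R : realType) (nu : {measure set T -> \bar R}).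
Hypothesis nufin : nu setT < +oo.
Hypothesis natl : forall A, measurable A -> 0 < nu A ->
  exists B, [/\ measurable B, B `<=` A, 0 < nu B & nu B < nu A].

Let m A := fine (nu A).
Let nufinA A : measurable A -> nu A \is a fin_num.
Proof.
move=> mA; rewrite ge0_fin_numE//; apply: le_lt_trans nufin.
by apply: le_measure; rewrite ?inE.
Qed.
Let mE A : measurable A -> nu A = (m A)%:E.
Proof. by move=> mA; rewrite /m fineK// nufinA. Qed.
Let m0 A : (0 <= m A)%R. Proof. exact: fine_ge0. Qed.
Let mU A B : measurable A -> measurable B -> A `&` B = set0 ->
  m (A `|` B) = (m A + m B)%R.
Proof.
by move=> mA mB AB; rewrite /m measureU// fineD// nufinA.
Qed.
Let mle A B : measurable A -> measurable B -> A `<=` B -> (m A <= m B)%R.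
Proof.
move=> mA mB AB; rewrite -lee_fin -!mE//.
by apply: le_measure; rewrite ?inE.
Qed.
Let mDiff A B : measurable A -> measurable B -> B `<=` A ->
  m (A `\` B) = (m A - m B)%R.
Proof.
move=> mA mB BA; have := mU mB (measurableD mA mB) (setDIK B A).
by rewrite setDUK// => ->; lra.
Qed.
Let natlm A : measurable A -> (0 < m A)%R ->
  exists B, [/\ measurable B, B `<=` A, (0 < m B)%R & (m B < m A)%R].
Proof.
move=> mA mA0; have [|B [mB BA B0 BA']] := natl mA; first by rewrite mE.
by exists B; split => //; rewrite -lte_fin -?mE.
Qed.

Lemma small n C : measurable C -> (0 < m C)%R -> exists D,
  [/\ measurable D, D `<=` C, (0 < m D)%R & (m D * 2 ^+ n <= m C)%R].
Proof.
move=> mC C0; elim: n => [|n [D [mD DC D0 DCn]]].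
  by exists C; split => //; rewrite expr0 mulr1.
have [D1 [mD1 D1D D10 D1D']] := natlm mD D0.
have p0 : (0 <= (2:R) ^+ n)%R by apply: exprn_ge0.
rewrite exprS.
have [h|h] := leP (m D1 * 2)%R (m D).
  exists D1; split => //; first exact: subset_trans DC.
  by nra.
exists (D `\` D1); split => //.
- exact: measurableD.
- by move=> x [/DC].
- by rewrite mDiff//; lra.
- by rewrite mDiff//; nra.
Qed.

Lemma small_eps C (eps : R) : measurable C -> (0 < m C)%R -> (0 < eps)%R ->
  exists D, [/\ measurable D, D `<=` C, (0 < m D)%R & (m D < eps)%R].
Proof.
move=> mC C0 e0.
pose n := Num.bound (m C / eps).
have hn : (m C / eps < n%:R)%R by apply: archi_boundP; rewrite divr_ge0// ltW.
have n2 : (n%:R <= (2:R) ^+ n)%R.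
  by rewrite -natrX ler_nat ltnW// ltn_expl.
have [D [mD DC D0 Dn]] := small n mC C0.
exists D; split => //.
move: hn; rewrite ltr_pdivrMr// => hn.
rewrite ltNge; apply/negP => h.
have h1 : (eps * 2 ^+ n <= m D * 2 ^+ n)%R by rewrite ler_wpM2r// exprn_ge0.
have h2 : (n%:R * eps <= eps * 2 ^+ n)%R by rewrite mulrC ler_wpM2l// ltW.
lra.
Qed.

Lemma sierp A c : measurable A -> (0 < c)%R -> (c < m A)%R ->
  exists B, [/\ measurable B, B `<=` A & nu B = c%:E].
Proof.
move=> mA c0 cA.
have mset0 : m set0 = 0%R by rewrite /m measure0.
pose adm B D := [/\ measurable D, D `<=` A `\` B & (m B + m D <= c)%R].
have step : forall B, exists D, (measurable B /\ (m B <= c)%R) ->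
    adm B D /\ (forall D', adm B D' -> (m D' <= 2 * m D)%R).
  move=> B; have [[mB Bc]|nB] := pselect (measurable B /\ (m B <= c)%R); last first.
    by exists set0.
  pose S := [set x : R | exists D, adm B D /\ x = m D].
  have S0 : S 0%R by exists set0; split => //; split => //; rewrite mset0 addr0.
  have hs : has_sup S.
    split; first by exists 0%R.
    by exists c => x [D [[mD DAB hc] ->]]; have := m0 B; lra.
  have s0 : (0 <= sup S)%R := (@sup_upper_bound _ S hs) _ S0.
  have [sp|sn] := ltP 0%R (sup S).
    have [e [D [aD ->]] he] := @sup_adherent _ S (sup S / 2) ltac:(lra) hs.
    exists D => _; split => // D' aD'.
    have : (m D' <= sup S)%R by apply: (@sup_upper_bound _ S hs); exists D'.
    lra.
  exists set0 => _; split; first by split => //; rewrite mset0 addr0.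
  move=> D' aD'; have : (m D' <= sup S)%R by apply: (@sup_upper_bound _ S hs); exists D'.
  rewrite mset0; lra.
have [st hst] := choice step.
pose Bs := fix Bs n := if n is k.+1 then Bs k `|` st (Bs k) else set0.
have inv : forall n, [/\ measurable (Bs n), Bs n `<=` A & (m (Bs n) <= c)%R].
  elim => [|n [mBn BnA Bnc]]; first by split => /=; rewrite ?mset0 ?ltW.
  have [[mD DAB hc] _] := hst (Bs n) (conj mBn Bnc).
  have dj : Bs n `&` st (Bs n) = set0.
    by rewrite setIC; apply/disjoints_subset => x /DAB [].
  split => /=.
  - exact: measurableU.
  - by move=> x [/BnA //|/DAB []].
  - by rewrite mU.
have mBs : forall n, measurable (Bs n) by move=> n; case: (inv n).
pose Binf := \bigcup_n Bs n.
have mBinf : measurable Binf by apply: bigcupT_measurable => n; case: (inv n).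
have BinfA : Binf `<=` A by move=> x [n _]; case: (inv n) => _ + _; exact.
have nd : nondecreasing_seq Bs.
  by apply/nondecreasing_seqP => n; apply/subsetPset => x /= h; left.
have cv := @nondecreasing_cvg_mu _ _ _ nu Bs mBs mBinf nd.
have Bic : (m Binf <= c)%R.
  rewrite -lee_fin -mE //; rewrite -(cvg_lim _ cv) //.
  apply: lime_le; first exact: cvgP cv.
  by apply: nearW => n /=; case: (inv n) => mBn _ Bnc; rewrite mE// lee_fin.
exists Binf; split => //; rewrite mE //; congr EFin.
apply/eqP; rewrite eq_le Bic /=; rewrite leNgt; apply/negP => hlt.
have BiA : (m Binf <= m A)%R by apply: mle.
have pos : (0 < m (A `\` Binf))%R by rewrite mDiff //; lra.
have [D [mD DAB D0 Dlt]] := @small_eps (A `\` Binf) (c - m Binf)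
   (measurableD mA mBinf) pos ltac:(lra).
have key : forall n, (m D <= 2 * m (st (Bs n)))%R.
  move=> n; case: (inv n) => mBn BnA Bnc.
  have [_ h] := hst (Bs n) (conj mBn Bnc); apply: h; split => //.
    by move=> x /DAB [Ax nBx]; split => // Bnx; apply: nBx; exists n.
  have : (m (Bs n) <= m Binf)%R by apply: mle => //; exact: bigcup_sup.
  lra.
have grow : forall n, (n%:R * (m D / 2) <= m (Bs n))%R.
  elim => [|n IH]; first by rewrite mul0r /= mset0.
  case: (inv n) => mBn BnA Bnc.
  have [[mSt DAB' hc] _] := hst (Bs n) (conj mBn Bnc).
  have dj : Bs n `&` st (Bs n) = set0.
    by rewrite setIC; apply/disjoints_subset => x /DAB' [].
  rewrite /= mU // -natr1 mulrDl mul1r; have := key n; lra.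
pose n := Num.bound (c / (m D / 2)).
have hn : (c / (m D / 2) < n%:R)%R by apply: archi_boundP; rewrite divr_ge0// ltW// divr_gt0.
move: hn; rewrite ltr_pdivrMr ?divr_gt0// => hn.
have := grow n; case: (inv n) => _ _ Bnc; lra.
Qed.
End sierp.

Section transfer.
Context d (T : measurableType d) (R : realType) (P : probability T R).
Variables (g : T -> R) (mg : measurable_fun setT g) (g0 : forall x, (0 <= g x)%R).

Lemma ipos D : measurable D -> (forall x, D x -> (0 < g x)%R) -> 0 < P D ->
  0 < \int[P]_(x in D) (g x)%:E.
Proof.
move=> mD Dg PD; rewrite lt0e integral_ge0 ?andbT; last by move=> x _; rewrite lee_fin.
apply/negP => /eqP h0.
have : \int[P]_(x in D) `|(EFin \o g) x| = 0.
  by rewrite -h0; apply: eq_integral => x _ /=; rewrite ger0_norm.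
move/(ae_eq_integral_abs _ mD) => [].
  by apply: measurable_funTS; exact/measurable_EFinP.
move=> N [mN PN sub].
have : P D <= P N.
  apply: le_measure; rewrite ?inE //.
  move=> x Dx; apply: sub => /= /(_ Dx) h; have := Dg x Dx; by rewrite -lte_fin h ltxx.
by rewrite PN leNgt PD.
Qed.

Lemma transfer : \int[P]_x (g x)%:E < +oo -> atomless P -> forall C, measurable C -> 0 < @dmeas _ _ _ P g mg g0 C ->
  exists B, [/\ measurable B, B `<=` C, 0 < @dmeas _ _ _ P g mg g0 B &
     @dmeas _ _ _ P g mg g0 B < @dmeas _ _ _ P g mg g0 C].
Proof.
move=> gfin atl C mC nuC.
set nu := @dmeas _ _ _ P g mg g0 in nuC *.
have mgC : measurable_fun C (EFin \o g).
  by apply: measurable_funTS; exact/measurable_EFinP.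
pose C' := C `&` [set x | 0 < (EFin \o g) x].
have mC' : measurable C' by exact: emeasurable_fun_o_infty.
have PC' : 0 < P C'.
  rewrite lt0e measure_ge0 andbT; apply/negP => /eqP PC0.
  have : nu C <= \int[P]_(x in C) (cst 0 x).
    apply: ae_ge0_le_integral => //.
    - by move=> x _; rewrite lee_fin.
    - exists C'; split => // x /= /not_implyP [Cx /negP].
      by rewrite -ltNge => h; split.
  by rewrite integral0 leNgt nuC.
have [D [mD DC' PD PDC']] := atl C' mC' PC'.
have mCD : measurable (C' `\` D) by exact: measurableD.
have PCD : 0 < P (C' `\` D).
  rewrite lt0e measure_ge0 andbT; apply/negP => /eqP h.
  have : P C' = P D + P (C' `\` D).
    by rewrite -measureU ?setDUK// setDIK.
  by rewrite h adde0 => hh; move: PDC'; rewrite hh ltxx.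
have nuD : 0 < nu D.
  apply: ipos => // x /DC' [_] /=; rewrite lte_fin //.
have nuCD : 0 < nu (C' `\` D).
  by apply: ipos => // x [[_ /=]]; rewrite lte_fin.
exists D; split => //; first by move=> x /DC' [].
have finD : nu D \is a fin_num.
  rewrite ge0_fin_numE ?measure_ge0//; apply: le_lt_trans gfin.
  have -> : \int[P]_x (g x)%:E = nu setT by [].
  by apply: le_measure; rewrite ?inE.
apply: (@lt_le_trans _ _ (nu C')).
  have -> : nu C' = nu D + nu (C' `\` D).
    by rewrite -measureU ?setDUK// setDIK.
  by rewrite lteDl.
by apply: le_measure; rewrite ?inE // => x [].
Qed.
End transfer.

Section indic_help.
Context {T : Type} {R : realType}.
Implicit Types A B : set T.

Lemma ind01 A x : \1_A x = 0%R :> R \/ \1_A x = 1%R :> R.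
Proof. by rewrite indicE; case: (x \in A); [right|left]. Qed.
Lemma ind_ge0 A x : (0 <= \1_A x :> R)%R.
Proof. by rewrite indicE; case: (x \in A). Qed.
Lemma ind_le1 A x : (\1_A x <= 1 :> R)%R.
Proof. by rewrite indicE; case: (x \in A). Qed.
Lemma indC A x : \1_(~` A) x = (1 - \1_A x)%R :> R.
Proof. by rewrite !indicE in_setC; case: (x \in A); rewrite /= ?subrr ?subr0. Qed.
Lemma indAA A x : (\1_A x * \1_A x)%R = \1_A x :> R.
Proof. by rewrite indicE; case: (x \in A); rewrite ?mulr1 ?mulr0. Qed.
Lemma indsub A B x : B `<=` A -> (\1_B x * \1_A x)%R = \1_B x :> R.
Proof.
move=> BA; rewrite !indicE; case: (boolP (x \in B)) => xB; last by rewrite mul0r.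
by rewrite (mem_set (BA x (set_mem xB))) mulr1.
Qed.
Lemma indD A B x : B `<=` A -> \1_(A `\` B) x = (\1_A x - \1_B x)%R :> R.
Proof.
move=> BA; rewrite !indicE in_setD; case: (boolP (x \in B)) => xB.
  by rewrite (mem_set (BA x (set_mem xB))) subrr.
by case: (x \in A); rewrite /= ?subr0.
Qed.
Lemma indcases A B x : B `<=` A ->
  (\1_A x = 0%R :> R /\ \1_B x = 0%R :> R) \/ (\1_A x = 1%R :> R /\ \1_B x = 0%R :> R)
  \/ (\1_A x = 1%R :> R /\ \1_B x = 1%R :> R).
Proof.
move=> BA; rewrite !indicE; case: (boolP (x \in B)) => xB.
  by rewrite (mem_set (BA x (set_mem xB))); right; right.
by case: (x \in A); [right; left|left].
Qed.
End indic_help.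


Unset Implicit Arguments. Set Strict Implicit.

Theorem mainTheorem8 (d : measure_display) (T : measurableType d) (R : realType)
  (P : probability T R) (Y1 Y2 : T -> R) :
  atomless P ->
  measurable_fun setT Y1 -> measurable_fun setT Y2 ->
  (forall x, (0 <= Y1 x)%R) -> (forall x, (Y1 x <= Y2 x)%R) ->
  \int[P]_x (Y1 x)%:E < 1 -> 1 < \int[P]_x (Y2 x)%:E ->
  \int[P]_x (Y2 x)%:E < +oo ->
  forall A : set T, measurable A ->
    (\int[P]_x (Y2 x * \1_A x + Y1 x * \1_(~` A) x)%:E <= 1 ->
       Qbar P Y1 Y2 A = \int[P]_x (Y2 x * \1_A x)%:E)
 /\ (1 < \int[P]_x (Y2 x * \1_A x + Y1 x * \1_(~` A) x)%:E ->
       (exists B : set T, [/\ measurable B, B `<=` A &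
          \int[P]_x (Y2 x * \1_B x + Y1 x * \1_(~` B) x)%:E = 1])
    /\ (forall B : set T, measurable B -> B `<=` A ->
          \int[P]_x (Y2 x * \1_B x + Y1 x * \1_(~` B) x)%:E = 1 ->
          Qbar P Y1 Y2 A = \int[P]_x (Y2 x * \1_B x + Y1 x * \1_(A `\` B) x)%:E)).
Proof.
move=> atl mY1 mY2 Y10 Y12 EY1 EY2 EY2fin A mA.
have Y20 x : (0 <= Y2 x)%R by exact: le_trans (Y10 x) (Y12 x).
have mI S : measurable S -> measurable_fun setT (\1_S : T -> R).
  by move=> mS; exact: measurable_indic.
have fin (h : T -> R) : measurable_fun setT h -> (forall x, 0 <= h x)%R ->
    (forall x, h x <= Y2 x)%R -> \int[P]_x (h x)%:E \is a fin_num.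
  by move=> mh h0 hle; exact: ifin mh mY2 h0 hle EY2fin.
have mYI (Y : T -> R) S : measurable_fun setT Y -> measurable S ->
    measurable_fun setT (fun x => Y x * \1_S x)%R.
  by move=> mY mS; apply: measurable_funM => //; exact: mI.
have YI0 (Y : T -> R) S : (forall x, 0 <= Y x)%R -> forall x, (0 <= Y x * \1_S x)%R.
  by move=> Y0 x; rewrite mulr_ge0 ?ind_ge0.
have YIle (Y : T -> R) S : (forall x, 0 <= Y x)%R -> forall x, (Y x * \1_S x <= Y x)%R.
  by move=> Y0 x; rewrite ler_piMr ?ind_le1.
pose g0 x := (Y2 x * \1_A x + Y1 x * \1_(~` A) x)%R.
have mg0 : measurable_fun setT g0.
  by apply: measurable_funD; apply: mYI => //; exact: measurableC.
have g0b x : (Y1 x <= g0 x)%R /\ (g0 x <= Y2 x)%R.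
  rewrite /g0 indC.
  have h1 := mulr_ge0 (eqbRL (subr_ge0 _ _) (Y12 x)) (ind_ge0 A x).
  have h2 : (0 <= (Y2 x - Y1 x) * (1 - \1_A x))%R.
    by apply: mulr_ge0; rewrite subr_ge0 ?ind_le1 ?Y12.
  by split; nra.
have g00 x : (0 <= g0 x)%R by exact: le_trans (Y10 x) (g0b x).1.
split.
- move=> h1; apply/eqP; rewrite eq_le; apply/andP; split.
    apply: ge_ereal_sup => _ [Q PQ <-].
    have [f [mf f0 f1 QA ae]] := ubPQ PQ; rewrite QA //.
    apply: ae_ge0_le_integral => //.
    + by move=> x _; rewrite lee_fin YI0.
    + by apply/measurable_EFinP; exact: mYI.
    + by move=> x _; rewrite lee_fin YI0.
    + by apply/measurable_EFinP; exact: mYI.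
    + by apply: filterS ae => x [_ fx] _; rewrite lee_fin ler_wpM2r ?ind_ge0.
  have fa := fin g0 mg0 g00 (fun x => (g0b x).2).
  have fc := fin Y2 mY2 Y20 (fun x => lexx _).
  pose ra := fine (\int[P]_x (g0 x)%:E); pose rc := fine (\int[P]_x (Y2 x)%:E).
  have ha : \int[P]_x (g0 x)%:E = ra%:E by rewrite fineK.
  have hc : \int[P]_x (Y2 x)%:E = rc%:E by rewrite fineK.
  have ra1 : (ra <= 1)%R by rewrite -lee_fin -ha.
  have rc1 : (1 < rc)%R by rewrite -lte_fin -hc.
  pose s := ((rc - 1) / (rc - ra))%R.
  have s0 : (0 <= s)%R by rewrite /s divr_ge0 // subr_ge0; lra.
  have s1 : (s <= 1)%R by rewrite /s ler_pdivrMr ?subr_gt0; lra.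
  have sE : (s * ra + (1 - s) * rc = 1)%R.
    rewrite /s; field; apply: lt0r_neq0; lra.
  pose f x := (s * g0 x + (1 - s) * Y2 x)%R.
  have mf : measurable_fun setT f.
    by apply: measurable_funD; apply: measurable_funM.
  have fb x : (Y1 x <= f x)%R /\ (f x <= Y2 x)%R.
    have [h3 h4] := g0b x; have h5 := Y12 x.
    have h6 : (0 <= s * (g0 x - Y1 x))%R by rewrite mulr_ge0 // subr_ge0.
    have h7 : (0 <= (1 - s) * (Y2 x - Y1 x))%R by rewrite mulr_ge0 // subr_ge0.
    have h8 : (0 <= s * (Y2 x - g0 x))%R by rewrite mulr_ge0 // subr_ge0.
    by rewrite /f; split; lra.
  have f1 : \int[P]_x (f x)%:E = 1.
    have m1 : measurable_fun setT (fun x => s * g0 x)%R.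
      exact: (measurable_funM (measurable_cst s) mg0).
    have m2 : measurable_fun setT (fun x => (1 - s) * Y2 x)%R.
      exact: (measurable_funM (measurable_cst (1 - s)%R) mY2).
    rewrite /f iD //; first last.
    + by move=> x; rewrite mulr_ge0 // subr_ge0.
    + by move=> x; rewrite mulr_ge0.
    by rewrite !iZ // ?subr_ge0 // ha hc -!EFinM -EFinD sE.
  have := achieve mf Y10 fb f1 mA; apply: le_trans.
  rewrite le_eqVlt; apply/orP; left; apply/eqP; apply: eq_integral => x _.
  by congr EFin; rewrite /f /g0 indC; case: (@ind01 _ R A x) => h; rewrite h; ring.
- move=> h2.
  have fY1 := fin Y1 mY1 Y10 Y12.
  pose rY1 := fine (\int[P]_x (Y1 x)%:E).
  have hY1 : \int[P]_x (Y1 x)%:E = rY1%:E by rewrite fineK.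
  have rY11 : (rY1 < 1)%R by rewrite -lte_fin -hY1.
  split.
    pose g x := (Y2 x - Y1 x)%R.
    have mg : measurable_fun setT g by exact: measurable_funB.
    have gpos x : (0 <= g x)%R by rewrite subr_ge0.
    have gfin : \int[P]_x (g x)%:E < +oo.
      apply: le_lt_trans EY2fin; apply: ile => // x.
      by rewrite /g lerBlDr lerDl.
    pose nu := @dmeas _ _ _ P g mg gpos.
    have nufin : nu setT < +oo by [].
    have natl := @transfer _ _ _ P g mg gpos gfin atl.
    have rel S : measurable S ->
        \int[P]_x (Y2 x * \1_S x + Y1 x * \1_(~` S) x)%:E = rY1%:E + nu S.
      move=> mS; rewrite /nu /dmeas iset -hY1 -iD //; last 2 first.
      + exact: mYI.
      + by move=> x; rewrite mulr_ge0 ?ind_ge0.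
      apply: eq_integral => x _; congr EFin; rewrite /g indC; ring.
    have nuAfin : nu A \is a fin_num.
      rewrite ge0_fin_numE ?measure_ge0//; apply: le_lt_trans nufin.
      by apply: le_measure; rewrite ?inE.
    pose c := (1 - rY1)%R.
    have c0 : (0 < c)%R by rewrite /c subr_gt0.
    have cA : (c < fine (nu A))%R.
      move: h2; rewrite rel // -(fineK nuAfin) -EFinD lte_fin /c; lra.
    have [B [mB BA nuB]] := @sierp _ _ _ nu nufin natl A c mA c0 cA.
    exists B; split => //; rewrite rel // (_ : nu B = c%:E); last exact: nuB.
    rewrite -EFinD /c.
    by rewrite addrCA subrr addr0.
  move=> B mB BA hB.
  have mAc : measurable (~` A) by exact: measurableC.
  have mBc : measurable (~` B) by exact: measurableC.
  have mAB : measurable (A `\` B) by exact: measurableD.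
  pose w x := (Y2 x * \1_B x + Y1 x * \1_(A `\` B) x)%R.
  have mw : measurable_fun setT w by apply: measurable_funD; exact: mYI.
  have w0 x : (0 <= w x)%R by rewrite addr_ge0 ?YI0.
  have wle x : (w x <= Y2 x)%R.
    rewrite /w (indD _ BA); have h5 := Y12 x; have h6 := Y10 x.
    case: (@indcases _ R A B x BA) => [[-> ->]|[[-> ->]|[-> ->]]]; lra.
  have fw := fin w mw w0 wle.
  apply/eqP; rewrite eq_le; apply/andP; split.
    apply: ge_ereal_sup => _ [Q PQ <-].
    have [f [mf f0 f1 QA ae]] := ubPQ PQ; rewrite QA //.
    have split1 : \int[P]_x (f x)%:E =
        \int[P]_x (f x * \1_A x)%:E + \int[P]_x (f x * \1_(~` A) x)%:E.
      rewrite -iD //; try exact: mYI; try exact: YI0.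
      by apply: eq_integral => x _; congr EFin; rewrite indC; ring.
    have lowAc : \int[P]_x (Y1 x * \1_(~` A) x)%:E <= \int[P]_x (f x * \1_(~` A) x)%:E.
      apply: ae_ge0_le_integral => //.
      + by move=> x _; rewrite lee_fin YI0.
      + by apply/measurable_EFinP; exact: mYI.
      + by move=> x _; rewrite lee_fin YI0.
      + by apply/measurable_EFinP; exact: mYI.
      + by apply: filterS ae => x [fx _] _; rewrite lee_fin ler_wpM2r ?ind_ge0.
    have split2 : \int[P]_x (Y2 x * \1_B x + Y1 x * \1_(~` B) x)%:E =
        \int[P]_x (w x)%:E + \int[P]_x (Y1 x * \1_(~` A) x)%:E.
      rewrite -iD //; try exact: mYI; try exact: YI0.
      apply: eq_integral => x _; congr EFin; rewrite /w !indC (indD _ BA); ring.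
    have fz := fin _ (mYI _ _ mY1 mAc) (YI0 _ _ Y10) (fun x => le_trans (YIle _ (~` A) Y10 x) (Y12 x)).
    have u0 := ige0 P (YI0 _ A f0).
    have v0 := ige0 P (YI0 _ (~` A) f0).
    move: split1 lowAc split2 u0 v0; rewrite f1 hB.
    move=> s1 lz s2 u0 v0.
    have fu : \int[P]_x (f x * \1_A x)%:E \is a fin_num.
      rewrite ge0_fin_numE //; apply: (@le_lt_trans _ _ 1); last exact: ltry.
      by rewrite s1 leeDl.
    have fv : \int[P]_x (f x * \1_(~` A) x)%:E \is a fin_num.
      rewrite ge0_fin_numE //; apply: (@le_lt_trans _ _ 1); last exact: ltry.
      by rewrite s1 leeDr.
    move: s1 lz s2; rewrite -(fineK fu) -(fineK fv) -(fineK fz) -(fineK fw).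
    rewrite -!EFinD !lee_fin => e1 lz2 e2.
    move: e1 e2 => /(congr1 fine) /= e1 /(congr1 fine) /= e2.
    lra.
  have fb x : (Y1 x <= Y2 x * \1_B x + Y1 x * \1_(~` B) x)%R /\
              (Y2 x * \1_B x + Y1 x * \1_(~` B) x <= Y2 x)%R.
    rewrite indC; have h5 := Y12 x; have h6 := Y10 x.
    by case: (@ind01 _ R B x) => ->; split; lra.
  have mf : measurable_fun setT (fun x => Y2 x * \1_B x + Y1 x * \1_(~` B) x)%R.
    by apply: measurable_funD; exact: mYI.
  have := achieve mf Y10 fb hB mA; apply: le_trans.
  rewrite le_eqVlt; apply/orP; left; apply/eqP; apply: eq_integral => x _.
  congr EFin; rewrite indC (indD _ BA).
  by case: (@indcases _ R A B x BA) => [[-> ->]|[[-> ->]|[-> ->]]]; ring.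
Qed.
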